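(* Let $\kappa:=\operatorname{arccosh}(3/2)$, $p$ a positive integer, $\xi:=\kappa+2p\pi i$, and \[ F(z):=\frac1\xi\left(\mathcal{L}_2\left(\frac{\xi(1-z)}{2\pi i}-p+1\right)-\mathcal{L}_2\left(\frac{\xi(1+z)}{2\pi i}-p\right)\right)-\kappa z+\frac{4p\pi^2}{\xi}. \] If $-\kappa<\Re(\xi z)<\kappa$ or $0<\Im(\xi z)<2\pi$, then \[ F(z)=\frac1\xi\mathrm{Li}_2\left(e^{-\xi(1+z)}\right)-\frac1\xi\mathrm{Li}_2\left(e^{-\xi(1-z)}\right)+\kappa z-2\pi i. \] Moreover, if $0<\Im(\xi z)<2\pi$, then also \[ F(z)=\frac1\xi\mathrm{Li}_2\left(e^{\xi(1-z)}\right)-\frac1\xi\mathrm{Li}_2\left(e^{\xi(1+z)}\right)-\kappa z+\frac{4p\pi^2}{\xi}. \]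
   Context: $\mathcal{L}_2(w):=\mathrm{Li}_2(e^{2\pi iw})$ if $\Im w\ge0$ and $\mathcal{L}_2(w):=\pi^2(2w^2-2w+\frac13)-\mathrm{Li}_2(e^{-2\pi iw})$ if $\Im w<0$, for $w\in\mathbb{C}\setminus((-\infty,0]\cup[1,\infty))$, where $\mathrm{Li}_2(z)=-\int_0^z\frac{\log(1-x)}{x}dx$ is the dilogarithm with branch cut $[1,\infty)$. *)

(* Defs.v *)
From Stdlib Require Import Reals.
From Coquelicot Require Import Coquelicot.
Open Scope R_scope.

Definition Carg (w : C) : R :=
  if Rle_dec 0 (Im w) then acos (Re w / Cmod w) else - acos (Re w / Cmod w).

Definition Clog (w : C) : C := (ln (Cmod w), Carg w).

Definition Cexp (w : C) : C :=
  (exp (Re w) * cos (Im w), exp (Re w) * sin (Im w)).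

(* Dilogarithm Li2 z = - int_0^z log(1-x)/x dx, integrated along the segment
   [0,z] (x = t z), which lies in the star-shaped domain C \ [1,oo). *)
Definition Li2 (z : C) : C :=
  Copp (RInt (V := C_R_CompleteNormedModule)
          (fun t : R => Cdiv (Clog (Cminus 1 (Cmult (RtoC t) z))) (RtoC t)) 0 1).

Definition calL2 (w : C) : C :=
  if Rle_dec 0 (Im w) then Li2 (Cexp (Cmult (Cmult (RtoC (2 * PI)) Ci) w))
  else Cminus
         (Cmult (RtoC (PI ^ 2))
            (Cplus (Cminus (Cmult 2 (Cmult w w)) (Cmult 2 w)) (RtoC (1 / 3))))
         (Li2 (Cexp (Copp (Cmult (Cmult (RtoC (2 * PI)) Ci) w)))).

(* kappa = arccosh(3/2) = ln(3/2 + sqrt((3/2)^2 - 1)). *)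
Definition kappa : R := ln (3 / 2 + sqrt ((3 / 2) ^ 2 - 1)).

Definition xi (p : nat) : C := (kappa, 2 * INR p * PI).

Definition twopii : C := Cmult (RtoC (2 * PI)) Ci.

Definition F (p : nat) (z : C) : C :=
  Cplus
    (Cminus
       (Cmult (Cinv (xi p))
          (Cminus
             (calL2 (Cplus (Cminus (Cdiv (Cmult (xi p) (Cminus 1 z)) twopii)
                                   (RtoC (INR p))) 1))
             (calL2 (Cminus (Cdiv (Cmult (xi p) (Cplus 1 z)) twopii)
                            (RtoC (INR p))))))
       (Cmult (RtoC kappa) z))
    (Cdiv (RtoC (4 * INR p * PI ^ 2)) (xi p)).

(* Main.v *)
Require Import Defs.
From Stdlib Require Import Reals Lra Lia.
From Coquelicot Require Import Coquelicot.
Open Scope R_scope.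

Lemma Cmod_pos_cond (w : C) : Im w <> 0 \/ 0 < Re w -> 0 < Cmod w + Re w.
Proof.
  destruct w as [x y]; unfold Cmod, Re, Im; cbn [fst snd].
  intros H.
  assert (Hs : Rabs x < sqrt (x ^ 2 + y ^ 2) \/ (y = 0 /\ 0 < x)).
  { destruct (Req_dec y 0) as [Hy|Hy].
    - right. destruct H; [contradiction|]. split; auto.
    - left. rewrite <- sqrt_Rsqr_abs. apply sqrt_lt_1_alt. split.
      apply Rle_0_sqr. unfold Rsqr. assert (0 < y*y) by (apply Rsqr_pos_lt; auto). simpl. lra. }
  destruct Hs as [Hs|[Hy Hx]].
  - pose proof (Rle_abs (-x)) as HH. rewrite Rabs_Ropp in HH. lra.
  - subst y. pose proof (sqrt_pos (x^2 + 0^2)). lra.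
Qed.

Lemma Cmod_sq (w : C) : Cmod w * Cmod w = Re w ^ 2 + Im w ^ 2.
Proof. unfold Cmod. rewrite sqrt_sqrt; auto. destruct w; simpl. nra. Qed.

Lemma Carg_unique (w : C) (al : R) : w <> 0%C -> - PI < al <= PI ->
  Re w = Cmod w * cos al -> Im w = Cmod w * sin al -> Carg w = al.
Proof.
  intros Hw Hal Hre Him.
  assert (Hm : 0 < Cmod w) by (apply Cmod_gt_0; auto).
  assert (Hc : Re w / Cmod w = cos al) by (rewrite Hre; field; lra).
  unfold Carg. rewrite Hc.
  destruct (Rle_dec 0 (Im w)) as [H|H].
  - assert (0 <= al).
    { destruct (Rle_dec 0 al); auto. pose proof (sin_lt_0_var al ltac:(lra) ltac:(lra)). nra. }
    apply acos_cos; lra.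
  - assert (al < 0).
    { destruct (Rlt_dec al 0); auto. pose proof (sin_ge_0 al ltac:(lra) ltac:(lra)). nra. }
    rewrite <- cos_neg. rewrite acos_cos; lra.
Qed.

Lemma Carg_polar (w : C) : w <> 0%C ->
  Re w = Cmod w * cos (Carg w) /\ Im w = Cmod w * sin (Carg w).
Proof.
  intros Hw. assert (Hm : 0 < Cmod w) by (apply Cmod_gt_0; auto).
  pose proof (Cmod_sq w) as Hsq.
  assert (Hb : -1 <= Re w / Cmod w <= 1).
  { split.
    - apply (Rmult_le_reg_r (Cmod w)); auto. field_simplify; try lra. nra.
    - apply (Rmult_le_reg_r (Cmod w)); auto. field_simplify; try lra. nra. }
  assert (Hs : sqrt (1 - (Re w / Cmod w)²) = Rabs (Im w) / Cmod w).
  { replace (1 - (Re w / Cmod w)²) with (Rsqr (Im w / Cmod w)).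
    rewrite sqrt_Rsqr_abs. unfold Rdiv. rewrite Rabs_mult, (Rabs_right (/ Cmod w)). auto.
    left; apply Rinv_0_lt_compat; auto.
    unfold Rsqr. apply (Rmult_eq_reg_r (Cmod w * Cmod w)); [|nra]. field_simplify; try lra. }
  unfold Carg. destruct (Rle_dec 0 (Im w)) as [H|H].
  - rewrite cos_acos, sin_acos by auto. rewrite Hs. rewrite Rabs_right by lra. split; field; lra.
  - rewrite cos_neg, sin_neg, cos_acos, sin_acos by auto. rewrite Hs. rewrite Rabs_left by lra. split; field; lra.
Qed.

Lemma eq_div (x N D : R) : 0 < D -> x * D = N -> x = N / D.
Proof. intros H E. subst N. field. lra. Qed.

Lemma Carg_2atan (w : C) : Im w <> 0 \/ 0 < Re w ->
  Carg w = 2 * atan (Im w / (Cmod w + Re w)).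
Proof.
  intros H. pose proof (Cmod_pos_cond w H) as Hp.
  assert (Hw : w <> 0%C).
  { intros ->. simpl in H. lra. }
  assert (Hm : 0 < Cmod w) by (apply Cmod_gt_0; auto).
  pose proof (Cmod_sq w) as Hsq.
  set (t := Im w / (Cmod w + Re w)).
  apply Carg_unique; auto.
  - pose proof (atan_bound t). lra.
  - rewrite cos_2a_cos, cos_atan.
    assert (H1 : 0 < 1 + t²) by (pose proof (Rle_0_sqr t); lra).
    assert (Hq : 1 / sqrt (1 + t²) * (1 / sqrt (1 + t²)) = 1 / (1 + t²)).
    { assert (0 < sqrt (1 + t²)) by (apply sqrt_lt_R0; lra). replace (1 / sqrt (1 + t²) * (1 / sqrt (1 + t²))) with (1 / (sqrt (1 + t²) * sqrt (1 + t²))) by (field; lra). rewrite sqrt_sqrt; lra. }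
    replace (2 * (1 / sqrt (1 + t²)) * (1 / sqrt (1 + t²)) - 1) with (2 * (1 / sqrt (1 + t²) * (1 / sqrt (1 + t²))) - 1) by ring.
    rewrite Hq. unfold t, Rsqr.
    field_simplify; [| split; nra].
    apply eq_div; [nra|].
    replace (Im w ^ 2) with (Cmod w * Cmod w - Re w ^ 2) by lra. ring.
  - rewrite sin_2a, cos_atan, sin_atan.
    assert (H1 : 0 < 1 + t²) by (pose proof (Rle_0_sqr t); lra).
    assert (Hs : sqrt (1 + t²) * sqrt (1 + t²) = 1 + t²) by (rewrite sqrt_sqrt; lra).
    assert (Hs0 : 0 < sqrt (1 + t²)) by (apply sqrt_lt_R0; lra).
    replace (2 * (t / sqrt (1 + t²)) * (1 / sqrt (1 + t²))) with (2 * t / (sqrt (1 + t²) * sqrt (1 + t²))) by (field; lra).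
    rewrite Hs. unfold t, Rsqr.
    field_simplify; [| split; nra].
    apply eq_div; [nra|].
    replace (Im w ^ 2) with (Cmod w * Cmod w - Re w ^ 2) by lra. ring.
Qed.

Definition dq (phi : R -> R) (l s : R) : R :=
  if Req_EM_T s 0 then l else phi s / s.

Lemma locally_neq (s : R) : s <> 0 -> locally s (fun u => u <> 0).
Proof.
  intros H. destruct (Rlt_dec s 0).
  - apply (locally_interval _ s m_infty 0); simpl; auto. intros; lra.
  - apply (locally_interval _ s 0 p_infty); simpl; auto. lra. intros; lra.
Qed.

Lemma dq_cont (phi : R -> R) (l s : R) :
  (s = 0 -> phi 0 = 0 /\ is_derive phi 0 l) ->
  (s <> 0 -> ex_derive phi s) -> continuous (dq phi l) s.
Proof.
  intros H0 H1. destruct (Req_dec s 0) as [Hs|Hs].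
  - subst s. destruct (H0 eq_refl) as [Hp Hd].
    apply continuity_pt_filterlim. apply is_derive_Reals in Hd.
    intros eps Heps. destruct (Hd eps Heps) as [del Hdel].
    exists del. split. apply cond_pos.
    intros x [[_ Hx] Hx2]. simpl in *. unfold R_dist in *.
    unfold dq. destruct (Req_EM_T 0 0); [|congruence].
    destruct (Req_EM_T x 0) as [E|E]. { exfalso; apply Hx; auto. }
    specialize (Hdel x E). rewrite Rplus_0_l, Hp, Rminus_0_r in Hdel.
    apply Hdel. rewrite Rminus_0_r in Hx2. auto.
  - apply (continuous_ext_loc _ (fun u => phi u / u)).
    + generalize (locally_neq s Hs). apply filter_imp. intros u Hu.
      unfold dq. destruct (Req_EM_T u 0); [contradiction|auto].
    + apply (ex_derive_continuous (K:=R_AbsRing) (V:=R_NormedModule) (fun u => phi u / u)). apply ex_derive_div; auto.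
      apply ex_derive_id.
Qed.

Lemma dq_ex_RInt (phi : R -> R) (l X : R) : 0 <= X ->
  phi 0 = 0 -> is_derive phi 0 l ->
  (forall s, 0 < s <= X -> ex_derive phi s) -> ex_RInt (dq phi l) 0 X.
Proof.
  intros HX Hp Hd He. apply (ex_RInt_continuous (V:=R_CompleteNormedModule)). intros z Hz.
  rewrite Rmin_left, Rmax_right in Hz by lra.
  apply dq_cont. intros ->; auto. intros Hz0. apply He. lra.
Qed.

Definition Mx (a b s : R) := (1 - s*a)^2 + (s*b)^2.
Definition ga (a b s : R) := ln (Mx a b s) / 2.
Definition gb (a b s : R) := 2 * atan (- (s*b) / (sqrt (Mx a b s) + (1 - s*a))).
Definition good (a b s : R) := s*b <> 0 \/ 0 < 1 - s*a.

Lemma Cmod_Mx a b s : Cmod (1 - s*a, - (s*b)) = sqrt (Mx a b s).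
Proof. unfold Cmod, Mx. f_equal. simpl. ring. Qed.

Lemma good_pos a b s : good a b s -> 0 < Mx a b s /\ 0 < sqrt (Mx a b s) + (1 - s*a).
Proof.
  intros H. assert (H' : Im (1 - s*a, - (s*b)) <> 0 \/ 0 < Re (1 - s*a, - (s*b))).
  { simpl. destruct H; [left|right]; auto. lra. }
  pose proof (Cmod_pos_cond _ H') as Hp. rewrite Cmod_Mx in Hp. simpl in Hp.
  split; auto.
  destruct (Rle_dec (Mx a b s) 0) as [Hm|Hm]; [|lra].
  exfalso. pose proof (pow2_ge_0 (1 - s*a)). pose proof (pow2_ge_0 (s*b)).
  assert (Mx a b s = 0). { unfold Mx in *. lra. }
  rewrite H2, sqrt_0 in Hp. unfold Mx in H2.
  assert (E1 : Rsqr (s*b) = 0) by (unfold Rsqr; simpl in *; lra).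
  assert (E2 : Rsqr (1-s*a) = 0) by (unfold Rsqr; simpl in *; lra).
  apply Rsqr_0_uniq in E1. apply Rsqr_0_uniq in E2.
  destruct H. apply H. auto. lra.
Qed.

Lemma ga_0 a b : ga a b 0 = 0.
Proof. unfold ga, Mx. replace ((1 - 0*a)^2 + (0*b)^2) with 1 by ring. rewrite ln_1. lra. Qed.

Lemma gb_0 a b : gb a b 0 = 0.
Proof. unfold gb. replace (- (0*b)) with 0 by ring. unfold Rdiv. rewrite Rmult_0_l, atan_0. lra. Qed.

Lemma ga_ex_derive a b s : good a b s -> ex_derive (ga a b) s.
Proof.
  intros H. destruct (good_pos a b s H) as [H1 H2]. unfold ga, Mx in *.
  auto_derive. lra.
Qed.

Lemma gb_ex_derive a b s : good a b s -> ex_derive (gb a b) s.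
Proof.
  intros H. destruct (good_pos a b s H) as [H1 H2]. unfold gb, Mx in *.
  auto_derive.
  match goal with |- context [sqrt ?e] => replace e with ((1 - s*a)^2 + (s*b)^2) by ring end.
  repeat split; try lra.
Qed.

Lemma ga_derive0 a b : is_derive (ga a b) 0 (-a).
Proof.
  unfold ga, Mx. auto_derive;
  replace ((1 + - (0 * a)) * ((1 + - (0 * a)) * 1) + 0 * b * (0 * b * 1)) with 1 by ring.
  lra. field.
Qed.

Lemma gb_derive0 a b : is_derive (gb a b) 0 (-b).
Proof.
  unfold gb, Mx. auto_derive;
  replace ((1 + - (0 * a)) * ((1 + - (0 * a)) * 1) + 0 * b * (0 * b * 1)) with 1 by ring;
  rewrite sqrt_1. repeat split; lra.
  replace (1 + (1 + - (0 * a))) with 2 by ring. replace (- (0 * b)) with 0 by ring.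
  field.
Qed.

Definition qa a b := dq (ga a b) (-a).
Definition qb a b := dq (gb a b) (-b).

Lemma P_eq (x : C) (s : R) : Cminus 1 (Cmult (RtoC s) x) = (1 - s * Re x, - (s * Im x)).
Proof. destruct x as [a b]. unfold Cminus, Cplus, Copp, Cmult, RtoC; simpl. f_equal; ring. Qed.

Lemma ln_sqrt' x : 0 < x -> ln (sqrt x) = ln x / 2.
Proof.
  intros H. assert (Hs : 0 < sqrt x) by (apply sqrt_lt_R0; auto).
  rewrite <- (sqrt_sqrt x) at 2 by lra. rewrite ln_mult by auto. field.
Qed.

Lemma Clog_P (a b s : R) : good a b s ->
  Clog (1 - s*a, - (s*b)) = (ga a b s, gb a b s).
Proof.
  intros H. destruct (good_pos a b s H) as [H1 H2]. unfold Clog. f_equal.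
  - rewrite Cmod_Mx. unfold ga. apply ln_sqrt'; auto.
  - rewrite Carg_2atan. rewrite Cmod_Mx. unfold gb. simpl. reflexivity.
    simpl. destruct H; [left|right]; auto. intro E. apply H. lra.
Qed.

Lemma integrand_eq (x : C) (t : R) : t <> 0 -> good (Re x) (Im x) t ->
  Cdiv (Clog (Cminus 1 (Cmult (RtoC t) x))) (RtoC t) =
  (ga (Re x) (Im x) t / t, gb (Re x) (Im x) t / t).
Proof.
  intros Ht H. rewrite P_eq, Clog_P by auto.
  unfold Cdiv, Cmult, Cinv, RtoC; simpl. f_equal; field; auto.
Qed.

Lemma qa_ex a b X : 0 <= X -> (forall s, 0 < s <= X -> good a b s) -> ex_RInt (qa a b) 0 X.
Proof.
  intros HX H. apply dq_ex_RInt; auto. apply ga_0. apply ga_derive0.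
  intros s Hs. apply ga_ex_derive; auto.
Qed.

Lemma qb_ex a b X : 0 <= X -> (forall s, 0 < s <= X -> good a b s) -> ex_RInt (qb a b) 0 X.
Proof.
  intros HX H. apply dq_ex_RInt; auto. apply gb_0. apply gb_derive0.
  intros s Hs. apply gb_ex_derive; auto.
Qed.

Lemma Li2_comp (x : C) : (forall s, 0 < s <= 1 -> good (Re x) (Im x) s) ->
  Li2 x = (- RInt (qa (Re x) (Im x)) 0 1, - RInt (qb (Re x) (Im x)) 0 1).
Proof.
  intros H. unfold Li2.
  assert (HR : RInt (V := C_R_CompleteNormedModule)
     (fun t : R => Cdiv (Clog (Cminus 1 (Cmult (RtoC t) x))) (RtoC t)) 0 1
     = (RInt (qa (Re x) (Im x)) 0 1, RInt (qb (Re x) (Im x)) 0 1)).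
  { apply is_RInt_unique.
    apply (is_RInt_fct_extend_pair (U := R_NormedModule) (V := R_NormedModule)).
    - apply (is_RInt_ext (qa (Re x) (Im x))).
      + intros t Ht. rewrite Rmin_left, Rmax_right in Ht by lra.
        rewrite integrand_eq by (try apply H; lra). simpl.
        unfold qa, dq. destruct (Req_EM_T t 0); [lra|auto].
      + apply (RInt_correct (V := R_CompleteNormedModule)). apply qa_ex; auto; lra.
    - apply (is_RInt_ext (qb (Re x) (Im x))).
      + intros t Ht. rewrite Rmin_left, Rmax_right in Ht by lra.
        rewrite integrand_eq by (try apply H; lra). simpl.
        unfold qb, dq. destruct (Req_EM_T t 0); [lra|auto].
      + apply (RInt_correct (V := R_CompleteNormedModule)). apply qb_ex; auto; lra. }
  rewrite HR. reflexivity.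
Qed.

Lemma sin0_cos (th : R) : 0 < th < 2*PI -> sin th = 0 -> cos th = -1.
Proof.
  intros Hth Hs. destruct (sin_eq_0_0 th Hs) as [k Hk]. subst th.
  pose proof PI_RGT_0.
  assert (0 < IZR k < 2).
  { split. apply (Rmult_lt_reg_r PI); lra. apply (Rmult_lt_reg_r PI); lra. }
  destruct H0 as [H1 H2]. apply lt_IZR in H1. apply lt_IZR in H2.
  assert (k = 1%Z) by lia. subst k. rewrite Rmult_1_l. apply cos_PI.
Qed.

Lemma good_circ (th s : R) : 0 < th < 2*PI -> 0 < s ->
  good (cos th) (sin th) s /\ good (cos th) (- sin th) s.
Proof.
  intros Hth Hs. unfold good. destruct (Req_dec (sin th) 0) as [E|E].
  - rewrite (sin0_cos th Hth E). split; right; lra.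
  - split; left; intro F; apply E; nra.
Qed.

Lemma my_scal_R (a b : R) : scal a b = a * b.
Proof. reflexivity. Qed.

Lemma scale_q (g : R -> R -> R -> R) (l : R -> R -> R) (a b r : R) :
  0 < r ->
  (forall y, g (r*a) (r*b) y = g a b (r*y)) ->
  ex_RInt (dq (g a b) (l a b)) 0 r ->
  RInt (dq (g (r*a) (r*b)) (l (r*a) (r*b))) 0 1 = RInt (dq (g a b) (l a b)) 0 r.
Proof.
  intros Hr Hg Hex.
  pose proof (RInt_comp_lin (V := R_CompleteNormedModule) (dq (g a b) (l a b)) r 0 0 1) as H.
  replace (r * 0 + 0) with 0 in H by ring. replace (r * 1 + 0) with r in H by ring.
  rewrite <- (H Hex). apply RInt_ext. intros y Hy.
  rewrite Rmin_left, Rmax_right in Hy by lra.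
  match goal with |- _ = scal r ?X => change (scal r X) with (r * X) end. unfold dq. replace (r*y+0) with (r*y) by ring.
  destruct (Req_EM_T y 0); [lra|]. destruct (Req_EM_T (r*y) 0) as [E|E].
  { apply Rmult_integral in E. lra. }
  match goal with |- ?A = ?B => change (@eq R A B) end. rewrite Hg. field. lra.
Qed.

Lemma ga_scale a b r y : ga (r*a) (r*b) y = ga a b (r*y).
Proof. unfold ga, Mx. f_equal. f_equal. ring. Qed.

Lemma gb_scale a b r y : gb (r*a) (r*b) y = gb a b (r*y).
Proof.
  unfold gb, Mx. replace ((1 - y * (r * a)) ^ 2 + (y * (r * b)) ^ 2) with ((1 - r * y * a) ^ 2 + (r * y * b) ^ 2) by ring.
  replace (y * (r*b)) with (r*y*b) by ring. replace (y * (r*a)) with (r*y*a) by ring. reflexivity.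
Qed.

Lemma qa_scale a b r : 0 < r -> (forall s, 0 < s <= r -> good a b s) ->
  RInt (qa (r*a) (r*b)) 0 1 = RInt (qa a b) 0 r.
Proof.
  intros Hr H. unfold qa.
  apply (scale_q ga (fun a b => -a) a b r Hr). apply ga_scale.
  apply qa_ex; auto. lra.
Qed.

Lemma qb_scale a b r : 0 < r -> (forall s, 0 < s <= r -> good a b s) ->
  RInt (qb (r*a) (r*b)) 0 1 = RInt (qb a b) 0 r.
Proof.
  intros Hr H. unfold qb.
  apply (scale_q gb (fun a b => -b) a b r Hr). apply gb_scale.
  apply qb_ex; auto. lra.
Qed.

Lemma ftc_q (g : R -> R) (r : R) : 0 < r ->
  (forall r', 0 < r' -> ex_RInt g 0 r') -> continuous g r ->
  is_derive (fun r' => RInt g 0 r') r (g r).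
Proof.
  intros Hr Hex Hc. apply (is_derive_RInt (V := R_NormedModule) g _ 0 r); auto.
  apply (locally_interval _ r 0 p_infty); simpl; auto.
  intros y Hy _. apply (RInt_correct (V := R_CompleteNormedModule)). apply Hex; auto.
Qed.

Lemma qa_cont a b r : 0 < r -> good a b r -> continuous (qa a b) r.
Proof. intros Hr H. apply dq_cont. lra. intros _. apply ga_ex_derive; auto. Qed.

Lemma qb_cont a b r : 0 < r -> good a b r -> continuous (qb a b) r.
Proof. intros Hr H. apply dq_cont. lra. intros _. apply gb_ex_derive; auto. Qed.

Lemma Carg_range_pos (w : C) : 0 <= Im w -> 0 <= Carg w <= PI.
Proof. intros H. unfold Carg. destruct (Rle_dec 0 (Im w)); [apply acos_bound|lra]. Qed.

Lemma Carg_range_neg (w : C) : Im w < 0 -> - PI <= Carg w <= 0.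
Proof. intros H. unfold Carg. destruct (Rle_dec 0 (Im w)); [lra|]. pose proof (acos_bound (Re w / Cmod w)). lra. Qed.

Lemma gb_Carg a b s : good a b s -> gb a b s = Carg (1 - s*a, - (s*b)).
Proof. intros H. pose proof (Clog_P a b s H) as E. apply (f_equal snd) in E. simpl in E. auto. Qed.

Lemma ga_Cmod a b s : good a b s -> ga a b s = ln (Cmod (1 - s*a, - (s*b))).
Proof. intros H. pose proof (Clog_P a b s H) as E. apply (f_equal fst) in E. simpl in E. auto. Qed.

Lemma Mx_ne0 a b s : good a b s -> ((1 - s*a, - (s*b)) : C) <> RtoC 0.
Proof.
  intros H E. destruct (good_pos a b s H) as [H1 _].
  assert (Cmod (1 - s*a, - (s*b)) = 0) by (rewrite E; apply Cmod_0).
  rewrite Cmod_Mx in H0. rewrite <- sqrt_0 in H0. apply sqrt_inj in H0; lra.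
Qed.

Lemma Mx_rad c sn r : c^2 + sn^2 = 1 -> 0 < r ->
  Mx c sn r = r^2 * Mx c (- sn) (/ r).
Proof. intros H Hr. unfold Mx. field_simplify; [|lra]. nra. Qed.

Lemma ga_rad (th r : R) : 0 < th < 2*PI -> 0 < r ->
  ga (cos th) (sin th) r - ga (cos th) (- sin th) (/ r) - ln r = 0.
Proof.
  intros Hth Hr. destruct (good_circ th r Hth Hr) as [G1 _].
  assert (Hr' : 0 < / r) by (apply Rinv_0_lt_compat; auto).
  destruct (good_circ th (/r) Hth Hr') as [_ G2].
  destruct (good_pos _ _ _ G1) as [P1 _]. destruct (good_pos _ _ _ G2) as [P2 _].
  unfold ga. rewrite (Mx_rad (cos th) (sin th) r) by (try lra; rewrite <- (sin2_cos2 th); unfold Rsqr; ring).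
  rewrite ln_mult by (try apply pow_lt; lra). simpl. rewrite Rmult_1_r, ln_mult by lra. field.
Qed.

Lemma gb_rad (th r : R) : 0 < th < 2*PI -> 0 < r ->
  gb (cos th) (sin th) r = gb (cos th) (- sin th) (/ r) + th - PI.
Proof.
  intros Hth Hr. destruct (good_circ th r Hth Hr) as [G1 _].
  assert (Hr' : 0 < / r) by (apply Rinv_0_lt_compat; auto).
  destruct (good_circ th (/r) Hth Hr') as [_ G2].
  rewrite !gb_Carg by auto.
  set (c := cos th) in *. set (sn := sin th) in *.
  assert (Hcs : c^2 + sn^2 = 1) by (unfold c, sn; rewrite <- (sin2_cos2 th); unfold Rsqr; ring).
  set (w' := (1 - / r * c, - (/ r * - sn))).
  destruct (Carg_polar w' (Mx_ne0 _ _ _ G2)) as [Hre Him].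
  set (be := Carg w') in *.
  assert (Hm : Cmod (1 - r*c, - (r*sn)) = r * Cmod w').
  { unfold w'. rewrite !Cmod_Mx. rewrite Mx_rad by auto. rewrite sqrt_mult.
    rewrite <- (Rabs_right r) at 3 by lra. rewrite <- sqrt_Rsqr_abs. unfold Rsqr. simpl. rewrite Rmult_1_r. reflexivity.
    apply pow2_ge_0. destruct (good_pos _ _ _ G2); lra. }
  assert (Hre' : Re w' = 1 - / r * c) by reflexivity.
  assert (Him' : Im w' = / r * sn) by (simpl; ring).
  apply Carg_unique.
  - apply Mx_ne0; auto.
  - destruct (Rlt_le_dec th PI) as [H1|H1].
    + assert (0 < sn) by (apply sin_gt_0; lra).
      pose proof (Carg_range_pos w' ltac:(rewrite Him'; apply Rmult_le_pos; lra)). fold be in H0. lra.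
    + destruct (Req_dec th PI) as [E|E].
      * pose proof (Carg_range_pos w' ltac:(rewrite Him'; unfold sn; rewrite E, sin_PI; lra)). fold be in H. lra.
      * assert (sn < 0) by (apply sin_lt_0; lra).
        assert (Im w' < 0) by (rewrite Him'; assert (0 < / r) by auto; nra).
        pose proof (Carg_range_neg w' H0). fold be in H2. lra.
  - change (Re (1 - r*c, - (r*sn))) with (1 - r*c). rewrite Hm.
    rewrite cos_minus, cos_PI, sin_PI, cos_plus, sin_plus.
    transitivity (r * (-(c * (Cmod w' * cos be)) + sn * (Cmod w' * sin be))).
    + rewrite <- Hre, <- Him, Hre', Him'.
      replace (r * (- (c * (1 - / r * c)) + sn * (/ r * sn))) with (- r*c + (c^2 + sn^2)) by (field; lra).
      rewrite Hcs. ring.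
    + fold c sn. ring.
  - change (Im (1 - r*c, - (r*sn))) with (- (r*sn)). rewrite Hm.
    rewrite sin_minus, cos_PI, sin_PI, cos_plus, sin_plus.
    transitivity (r * (-(c * (Cmod w' * sin be)) - sn * (Cmod w' * cos be))).
    + rewrite <- Hre, <- Him, Hre', Him'. field. lra.
    + fold c sn. ring.
Qed.


Lemma is_derive_eq (f : R -> R) (x l l' : R) : is_derive f x l -> l = l' -> is_derive f x l'.
Proof. intros H <-; auto. Qed.

Lemma const_pos (f : R -> R) : (forall r, 0 < r -> is_derive f r 0) -> forall r, 0 < r -> f r = f 1.
Proof.
  intros H r Hr. destruct (Rlt_le_dec r 1) as [H1|H1].
  - apply (eq_is_derive (V := R_NormedModule)); auto. intros t Ht. apply H. lra.
  - destruct (Req_dec r 1) as [->|E]; auto. symmetry.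
    apply (eq_is_derive (V := R_NormedModule)); [|lra]. intros t Ht. apply H. lra.
Qed.

Definition Phia (th r : R) := RInt (qa (cos th) (sin th)) 0 r + RInt (qa (cos th) (- sin th)) 0 (/ r) - ln r ^ 2 / 2.
Definition Phib (th r : R) := RInt (qb (cos th) (sin th)) 0 r + RInt (qb (cos th) (- sin th)) 0 (/ r) - (th - PI) * ln r.

Lemma circ_ex (th : R) : 0 < th < 2*PI -> forall r, 0 < r ->
  ex_RInt (qa (cos th) (sin th)) 0 r /\ ex_RInt (qa (cos th) (- sin th)) 0 r /\
  ex_RInt (qb (cos th) (sin th)) 0 r /\ ex_RInt (qb (cos th) (- sin th)) 0 r.
Proof.
  intros Hth r Hr. repeat split.
  - apply qa_ex; [lra|]. intros s Hs. apply good_circ; auto; lra.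
  - apply qa_ex; [lra|]. intros s Hs. apply good_circ; auto; lra.
  - apply qb_ex; [lra|]. intros s Hs. apply good_circ; auto; lra.
  - apply qb_ex; [lra|]. intros s Hs. apply good_circ; auto; lra.
Qed.

Lemma inv_derive (r : R) : 0 < r -> is_derive (fun x => / x) r (- / r ^ 2).
Proof. intros Hr. auto_derive. lra. field. lra. Qed.

Lemma Phia_derive (th r : R) : 0 < th < 2*PI -> 0 < r -> is_derive (Phia th) r 0.
Proof.
  intros Hth Hr. assert (Hr' : 0 < / r) by (apply Rinv_0_lt_compat; auto).
  pose proof (circ_ex th Hth) as Hex.
  assert (H1 : is_derive (fun x => RInt (qa (cos th) (sin th)) 0 x) r (qa (cos th) (sin th) r)).
  { apply ftc_q; auto. intros; apply Hex; auto. apply qa_cont; auto. apply good_circ; auto. }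
  assert (H2' : is_derive (fun x => RInt (qa (cos th) (- sin th)) 0 x) (/ r) (qa (cos th) (- sin th) (/ r))).
  { apply ftc_q; auto. intros; apply Hex; auto. apply qa_cont; auto. apply good_circ; auto. }
  pose proof (is_derive_comp _ _ r _ _ H2' (inv_derive r Hr)) as H2.
  assert (H3 : is_derive (fun x => ln x ^ 2 / 2) r (ln r / r)).
  { auto_derive. lra. field. lra. }
  pose proof (is_derive_minus _ _ r _ _ (is_derive_plus _ _ r _ _ H1 H2) H3) as H.
  eapply is_derive_eq.
  - eapply is_derive_ext; [|exact H]. intros t. reflexivity.
  - change (qa (cos th) (sin th) r + (- / r ^ 2) * qa (cos th) (- sin th) (/ r) - ln r / r = 0).
    unfold qa, dq. destruct (Req_EM_T r 0); [lra|]. destruct (Req_EM_T (/ r) 0); [lra|].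
    pose proof (ga_rad th r Hth Hr).
    replace (ga (cos th) (sin th) r / r + - / r ^ 2 * (ga (cos th) (- sin th) (/ r) / / r) - ln r / r)
      with ((ga (cos th) (sin th) r - ga (cos th) (- sin th) (/ r) - ln r) / r) by (field; lra).
    rewrite H0. field. lra.
Qed.

Lemma Phib_derive (th r : R) : 0 < th < 2*PI -> 0 < r -> is_derive (Phib th) r 0.
Proof.
  intros Hth Hr. assert (Hr' : 0 < / r) by (apply Rinv_0_lt_compat; auto).
  pose proof (circ_ex th Hth) as Hex.
  assert (H1 : is_derive (fun x => RInt (qb (cos th) (sin th)) 0 x) r (qb (cos th) (sin th) r)).
  { apply ftc_q; auto. intros; apply Hex; auto. apply qb_cont; auto. apply good_circ; auto. }
  assert (H2' : is_derive (fun x => RInt (qb (cos th) (- sin th)) 0 x) (/ r) (qb (cos th) (- sin th) (/ r))).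
  { apply ftc_q; auto. intros; apply Hex; auto. apply qb_cont; auto. apply good_circ; auto. }
  pose proof (is_derive_comp _ _ r _ _ H2' (inv_derive r Hr)) as H2.
  assert (H3 : is_derive (fun x => (th - PI) * ln x) r ((th - PI) / r)).
  { auto_derive. lra. field. lra. }
  pose proof (is_derive_minus _ _ r _ _ (is_derive_plus _ _ r _ _ H1 H2) H3) as H.
  eapply is_derive_eq.
  - eapply is_derive_ext; [|exact H]. intros t. reflexivity.
  - change (qb (cos th) (sin th) r + (- / r ^ 2) * qb (cos th) (- sin th) (/ r) - (th - PI) / r = 0).
    unfold qb, dq. destruct (Req_EM_T r 0); [lra|]. destruct (Req_EM_T (/ r) 0); [lra|].
    pose proof (gb_rad th r Hth Hr).
    replace (gb (cos th) (sin th) r / r + - / r ^ 2 * (gb (cos th) (- sin th) (/ r) / / r) - (th - PI) / r)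
      with ((gb (cos th) (sin th) r - gb (cos th) (- sin th) (/ r) - (th - PI)) / r) by (field; lra).
    rewrite H0. field. lra.
Qed.

Lemma Mx_circ (u v : R) : Mx (cos u) (sin u) v = (v - cos u)^2 + (sin u)^2.
Proof. unfold Mx. pose proof (sin2_cos2 u). unfold Rsqr in H. nra. Qed.

Lemma Mx_circ_pos (u v : R) : 0 < u < 2*PI -> -1 < v -> 0 < Mx (cos u) (sin u) v.
Proof.
  intros Hu Hv. rewrite Mx_circ. destruct (Req_dec (sin u) 0) as [E|E].
  - rewrite E, (sin0_cos u Hu E). nra.
  - pose proof (pow2_ge_0 (v - cos u)). assert (0 < sin u ^ 2) by (apply pow2_gt_0; auto). lra.
Qed.

Lemma qa_circ_derive (u v : R) : 0 < u < 2*PI -> -1 < v ->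
  is_derive (fun z => qa (cos z) (sin z) v) u (sin u / Mx (cos u) (sin u) v).
Proof.
  intros Hu Hv. pose proof (Mx_circ_pos u v Hu Hv) as Hp.
  unfold qa, dq. destruct (Req_EM_T v 0) as [E|E].
  - subst v. unfold Mx in *. auto_derive. auto.
    replace ((1 - 0 * cos u) ^ 2 + (0 * sin u) ^ 2) with 1 by ring. field.
  - unfold ga. unfold Mx in *. auto_derive;
    replace ((1 + - (v * cos u)) * ((1 + - (v * cos u)) * 1) + v * sin u * (v * sin u * 1))
      with ((1 - v * cos u) ^ 2 + (v * sin u) ^ 2) by ring. lra.
    field. split; lra.
Qed.

Lemma cont2_D (th t : R) : 0 < th < 2*PI -> -1 < t ->
  continuity_2d_pt (fun u v => sin u / Mx (cos u) (sin u) v) th t.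
Proof.
  intros Hth Ht.
  assert (Cs : continuity_2d_pt (fun u v => sin u) th t).
  { apply (continuity_1d_2d_pt_comp sin (fun u v => u)). apply continuity_sin. apply continuity_2d_pt_id1. }
  assert (Cc : continuity_2d_pt (fun u v => cos u) th t).
  { apply (continuity_1d_2d_pt_comp cos (fun u v => u)). apply continuity_cos. apply continuity_2d_pt_id1. }
  assert (CM : continuity_2d_pt (fun u v => Mx (cos u) (sin u) v) th t).
  { apply (continuity_2d_pt_ext (fun u v => (1 - v * cos u) * (1 - v * cos u) + (v * sin u) * (v * sin u))).
    intros; unfold Mx; ring.
    apply continuity_2d_pt_plus; apply continuity_2d_pt_mult;
      try apply continuity_2d_pt_minus; try apply continuity_2d_pt_mult;
      try apply continuity_2d_pt_const; try apply continuity_2d_pt_id2; auto. }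
  apply (continuity_2d_pt_ext (fun u v => sin u * / Mx (cos u) (sin u) v)). intros; reflexivity.
  apply continuity_2d_pt_mult; auto. apply continuity_2d_pt_inv; auto.
  pose proof (Mx_circ_pos th t Hth Ht). lra.
Qed.

Definition Rc (th : R) := RInt (qa (cos th) (sin th)) 0 1.

Lemma Rc_derive (th : R) : 0 < th < 2*PI ->
  is_derive Rc th (RInt (fun t => sin th / Mx (cos th) (sin th) t) 0 1).
Proof.
  intros Hth.
  assert (HD : forall u v, 0 < u < 2*PI -> -1 < v ->
     Derive (fun z => qa (cos z) (sin z) v) u = sin u / Mx (cos u) (sin u) v).
  { intros u v Hu Hv. apply is_derive_unique. apply qa_circ_derive; auto. }
  assert (Hr : RInt (fun t => sin th / Mx (cos th) (sin th) t) 0 1 =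
               RInt (fun t => Derive (fun u => qa (cos u) (sin u) t) th) 0 1).
  { apply RInt_ext. intros x Hx. rewrite Rmin_left, Rmax_right in Hx by lra.
    rewrite HD; auto; lra. }
  rewrite Hr. unfold Rc.
  apply (is_derive_RInt_param (fun u t => qa (cos u) (sin u) t) 0 1 th).
  - apply (locally_interval _ th 0 (2*PI)); simpl; try lra.
    intros y Hy1 Hy2 t Ht. rewrite Rmin_left, Rmax_right in Ht by lra.
    eexists. apply qa_circ_derive; lra.
  - intros t Ht. rewrite Rmin_left, Rmax_right in Ht by lra.
    apply (continuity_2d_pt_ext_loc (fun u v => sin u / Mx (cos u) (sin u) v)).
    + assert (Hd : 0 < Rmin (Rmin th (2*PI - th)) (1/2)).
      { apply Rmin_glb_lt; [apply Rmin_glb_lt|]; lra. }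
      exists (mkposreal _ Hd). intros u v Hu Hv. simpl in Hu, Hv.
      pose proof (Rmin_l (Rmin th (2*PI - th)) (1/2)). pose proof (Rmin_r (Rmin th (2*PI - th)) (1/2)).
      pose proof (Rmin_l th (2*PI - th)). pose proof (Rmin_r th (2*PI - th)).
      apply Rabs_def2 in Hu. apply Rabs_def2 in Hv.
      rewrite HD; auto; lra.
    + apply cont2_D; lra.
  - apply (locally_interval _ th 0 (2*PI)); simpl; try lra.
    intros y Hy1 Hy2. apply (circ_ex y ltac:(lra) 1 ltac:(lra)).
Qed.

Lemma int_D (th : R) : 0 < th <= PI ->
  RInt (fun t => sin th / Mx (cos th) (sin th) t) 0 1 = (PI - th) / 2.
Proof.
  intros Hth. destruct (Req_dec th PI) as [E|E].
  - subst th. rewrite sin_PI.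
    rewrite (RInt_ext _ (fun _ => 0)).
    + rewrite RInt_const. change (scal (1 - 0) 0) with ((1 - 0) * 0). lra.
    + intros; match goal with |- ?A = ?B => change (@eq R A B) end; unfold Rdiv; ring.
  - assert (Hth' : 0 < th < PI) by lra.
    assert (Hs : 0 < sin th) by (apply sin_gt_0; lra).
    assert (Hp : forall t, 0 <= t <= 1 -> 0 < Mx (cos th) (sin th) t).
    { intros t Ht. apply Mx_circ_pos; lra. }
    assert (HI : is_RInt (fun t => sin th / Mx (cos th) (sin th) t) 0 1
        (minus (atan ((1 - cos th) / sin th)) (atan ((0 - cos th) / sin th)))).
    { apply (is_RInt_derive (V := R_CompleteNormedModule) (fun t => atan ((t - cos th) / sin th))).
      - intros x Hx. rewrite Rmin_left, Rmax_right in Hx by lra.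
        pose proof (Hp x Hx) as Hpx. rewrite Mx_circ in *.
        auto_derive. lra. unfold Rsqr. field. split. lra. nra.
      - intros x Hx. rewrite Rmin_left, Rmax_right in Hx by lra.
        pose proof (Hp x Hx) as Hpx.
        apply (ex_derive_continuous (K:=R_AbsRing) (V:=R_NormedModule) (fun t => sin th / Mx (cos th) (sin th) t)).
        unfold Mx in *. auto_derive. lra. }
    apply (is_RInt_unique (V := R_CompleteNormedModule)) in HI. rewrite HI.
    change (minus (atan ((1 - cos th) / sin th)) (atan ((0 - cos th) / sin th)))
      with (atan ((1 - cos th) / sin th) - atan ((0 - cos th) / sin th)).
    set (al := th / 2).
    assert (Hal : th = 2 * al) by (unfold al; field).
    assert (Hca : 0 < cos al) by (apply cos_gt_0; unfold al; lra).
    assert (H1 : (1 - cos th) / sin th = tan al).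
    { rewrite Hal, cos_2a_sin, sin_2a. unfold tan. assert (0 < sin al) by (apply sin_gt_0; unfold al; lra). field. split; lra.  }
    assert (H2 : (0 - cos th) / sin th = - tan (PI/2 - th)).
    { unfold tan. rewrite sin_shift, cos_shift. field. lra. }
    rewrite H1, H2, atan_opp, !atan_tan; unfold al; lra.
Qed.

Ltac reqR := match goal with |- ?A = ?B => change (@eq R A B) end.

Lemma Rc_const (th : R) : 0 < th <= PI -> Rc th + (th - PI)^2/4 = Rc PI.
Proof.
  intros Hth. destruct (Req_dec th PI) as [E|E].
  - subst. replace ((PI - PI)^2/4) with 0 by field. ring.
  - pose proof PI_RGT_0.
    replace (Rc PI) with (Rc PI + (PI - PI)^2/4) by (field).
    apply (eq_is_derive (V := R_NormedModule) (fun x => Rc x + (x - PI)^2/4)); [|lra].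
    intros t Ht.
    assert (H1 : is_derive (fun x => (x - PI)^2/4) t ((t - PI)/2)).
    { auto_derive. auto. reqR. field. }
    pose proof (is_derive_plus _ _ t _ _ (Rc_derive t ltac:(lra)) H1) as H2.
    eapply is_derive_eq; [exact H2|].
    change (RInt (fun t0 : R => sin t / Mx (cos t) (sin t) t0) 0 1 + (t - PI) / 2 = 0).
    rewrite int_D by lra. field.
Qed.

Lemma qa_conj (c s : R) : forall t, qa c (- s) t = qa c s t.
Proof.
  intros t. unfold qa, dq. destruct (Req_EM_T t 0); auto.
  unfold ga, Mx. replace ((t * - s)^2) with ((t*s)^2) by ring. reflexivity.
Qed.

Lemma Rc_sym (th : R) : Rc (2*PI - th) = Rc th.
Proof.
  unfold Rc. rewrite cos_minus, sin_minus, cos_2PI, sin_2PI.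
  replace (1 * cos th + 0 * sin th) with (cos th) by ring.
  replace (0 * cos th - 1 * sin th) with (- sin th) by ring.
  apply RInt_ext. intros; apply qa_conj.
Qed.

Definition Lf := dq (fun s => ln (1 + s)) 1.

Lemma Lf_cont (s : R) : 0 <= s -> continuous Lf s.
Proof.
  intros Hs. apply dq_cont.
  - intros ->. split. rewrite Rplus_0_r; apply ln_1. auto_derive. lra. reqR. field.
  - intros _. auto_derive. lra.
Qed.

Lemma Rc_PI : Rc PI = RInt Lf 0 1.
Proof.
  unfold Rc. rewrite cos_PI, sin_PI. apply RInt_ext. intros t Ht.
  rewrite Rmin_left, Rmax_right in Ht by lra.
  unfold qa, Lf, dq. destruct (Req_EM_T t 0); [lra|].
  unfold ga, Mx. replace ((1 - t * -1) ^ 2 + (t * 0) ^ 2) with ((1 + t) * (1 + t)) by ring.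
  rewrite ln_mult by lra. reqR. field. auto.
Qed.

Lemma Rc_PI2 : 4 * Rc (PI/2) = RInt Lf 0 1.
Proof.
  unfold Rc. rewrite cos_PI2, sin_PI2.
  pose proof (RInt_comp (V := R_CompleteNormedModule) Lf (fun y => y^2) (fun y => 2*y) 0 1) as H.
  simpl in H. replace (0 * (0 * 1)) with 0 in H by ring. replace (1 * (1 * 1)) with 1 in H by ring.
  rewrite <- H.
  - rewrite <- (RInt_scal (V := R_CompleteNormedModule)).
    + apply RInt_ext. intros y Hy. rewrite Rmin_left, Rmax_right in Hy by lra.
      change (4 * qa 0 1 y = (2*y) * Lf (y * (y * 1))).
      unfold qa, Lf, dq. destruct (Req_EM_T y 0); [lra|]. destruct (Req_EM_T (y * (y*1)) 0) as [E|E].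
      { nra. }
      unfold ga, Mx. replace ((1 - y * 0) ^ 2 + (y * 1) ^ 2) with (1 + y * (y * 1)) by ring.
      field. lra.
    + apply qa_ex. lra. intros s Hs. left. lra.
  - intros x Hx. rewrite Rmin_left, Rmax_right in Hx by lra. apply Lf_cont. nra.
  - intros x Hx. split. auto_derive. auto. reqR. ring.
    apply (ex_derive_continuous (K:=R_AbsRing) (V:=R_NormedModule) (fun y => 2 * y)). auto_derive. auto.
Qed.

Lemma Rc_val (th : R) : 0 < th < 2*PI -> Rc th = PI^2/12 - (th - PI)^2/4.
Proof.
  intros Hth. pose proof PI_RGT_0.
  assert (K1 : Rc (PI/2) + (PI/2 - PI)^2/4 = Rc PI) by (apply Rc_const; lra).
  assert (K2 : 4 * Rc (PI/2) = Rc PI) by (rewrite Rc_PI2, Rc_PI; auto).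
  assert (KP : Rc PI = PI^2/12) by nra.
  destruct (Rle_dec th PI) as [H1|H1].
  - pose proof (Rc_const th ltac:(lra)). lra.
  - rewrite <- (Rc_sym th). pose proof (Rc_const (2*PI - th) ltac:(lra)).
    replace ((th - PI)^2) with ((2*PI - th - PI)^2) by ring. lra.
Qed.

Lemma gb_conj (c s t : R) : gb c (- s) t = - gb c s t.
Proof.
  unfold gb, Mx. replace ((t * - s)^2) with ((t*s)^2) by ring.
  set (D := sqrt ((1 - t * c) ^ 2 + (t * s) ^ 2) + (1 - t * c)).
  replace (- (t * - s) / D) with (- (- (t * s) / D)) by (unfold Rdiv; ring).
  rewrite atan_opp. ring.
Qed.

Lemma qb_conj (c s : R) : forall t, qb c (- s) t = - qb c s t.
Proof.
  intros t. unfold qb, dq. destruct (Req_EM_T t 0). ring.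
  rewrite gb_conj. unfold Rdiv. ring.
Qed.

Lemma RInt_neg (f : R -> R) a b : ex_RInt f a b -> RInt (fun x => - f x) a b = - RInt f a b.
Proof. intros H. exact (RInt_opp (V:=R_CompleteNormedModule) f a b H). Qed.

Lemma good_scale a b r s : good a b (r*s) -> good (r*a) (r*b) s.
Proof. unfold good. intros [H|H]; [left|right]. intro E; apply H; rewrite <- E; ring. lra. Qed.

Lemma KL (th r : R) : 0 < th < 2*PI -> 0 < r ->
  Cplus (Li2 (r * cos th, r * sin th)) (Li2 (/ r * cos th, / r * - sin th)) =
  (- (PI^2/6) - (ln r ^ 2 - (th - PI)^2)/2, - ((th - PI) * ln r)).
Proof.
  intros Hth Hr. assert (Hr' : 0 < / r) by (apply Rinv_0_lt_compat; auto).
  rewrite (Li2_comp (r * cos th, r * sin th)).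
  2:{ intros s Hs. simpl. apply good_scale. apply good_circ; auto. nra. }
  rewrite (Li2_comp (/ r * cos th, / r * - sin th)).
  2:{ intros s Hs. simpl. apply good_scale. apply good_circ; auto. nra. }
  simpl Re; simpl Im.
  rewrite !qa_scale, !qb_scale; auto; try (intros s Hs; apply good_circ; lra).
  pose proof (const_pos (Phia th) (fun r Hr => Phia_derive th r Hth Hr) r Hr) as HA.
  pose proof (const_pos (Phib th) (fun r Hr => Phib_derive th r Hth Hr) r Hr) as HB.
  unfold Phia, Phib in HA, HB. rewrite Rinv_1, ln_1 in HA, HB.
  rewrite (RInt_ext (qa (cos th) (- sin th)) (qa (cos th) (sin th)) 0 1) in HA by (intros; apply qa_conj).
  rewrite (RInt_ext (qb (cos th) (- sin th)) (fun t => - (qb (cos th) (sin th) t)) 0 1) in HB by (intros; apply qb_conj).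
  rewrite RInt_neg in HB.
  2:{ apply (circ_ex th Hth 1 ltac:(lra)). }
  fold (Rc th) in HA. rewrite Rc_val in HA by auto.
  unfold Cplus. simpl. f_equal.
  - simpl in HA. lra.
  - simpl in HB. lra.
Qed.

Definition Pw (w : C) : C :=
  Cmult (RtoC (PI ^ 2)) (Cplus (Cminus (Cmult 2 (Cmult w w)) (Cmult 2 w)) (RtoC (1 / 3))).

Lemma KLw (w : C) : 0 < Re w < 1 ->
  Li2 (Cexp (Cmult (Cmult (RtoC (2 * PI)) Ci) w)) =
  Cminus (Pw w) (Li2 (Cexp (Copp (Cmult (Cmult (RtoC (2 * PI)) Ci) w)))).
Proof.
  destruct w as [a b]. simpl Re. intros Ha. pose proof PI_RGT_0.
  set (r := exp (- (2 * PI * b))). set (th := 2 * PI * a).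
  assert (Hr : 0 < r) by apply exp_pos.
  assert (E1 : Cexp (Cmult (Cmult (RtoC (2 * PI)) Ci) (a, b)) = (r * cos th, r * sin th)).
  { unfold Cexp, r, th. simpl. f_equal; f_equal; f_equal; ring. }
  assert (E2 : Cexp (Copp (Cmult (Cmult (RtoC (2 * PI)) Ci) (a, b))) = (/ r * cos th, / r * - sin th)).
  { unfold Cexp, r, th. simpl. rewrite <- exp_Ropp. rewrite <- cos_neg, <- sin_neg.
    f_equal; f_equal; f_equal; ring. }
  rewrite E1, E2.
  pose proof (KL th r ltac:(unfold th; nra) Hr) as K.
  replace (Li2 (r * cos th, r * sin th)) with
    (Cminus (Cplus (Li2 (r * cos th, r * sin th)) (Li2 (/ r * cos th, / r * - sin th))) (Li2 (/ r * cos th, / r * - sin th))) by ring.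
  rewrite K. f_equal.
  unfold r, th. rewrite ln_exp. unfold Pw, Cmult, Cplus, Cminus, Copp, RtoC. simpl. f_equal; field.
Qed.

Lemma kappa_pos : 0 < kappa.
Proof.
  unfold kappa. rewrite <- ln_1. apply ln_increasing. lra.
  pose proof (sqrt_pos ((3 / 2) ^ 2 - 1)). lra.
Qed.

Lemma xi_neq0 p : xi p <> RtoC 0.
Proof. intros E. apply (f_equal fst) in E. simpl in E. pose proof kappa_pos. lra. Qed.

Lemma twopii_neq0 : twopii <> RtoC 0.
Proof.
  intros E. apply (f_equal snd) in E. unfold twopii, Cmult, Ci, RtoC in E. simpl in E.
  pose proof PI_RGT_0. lra.
Qed.

Lemma Cexp_per (u u' : C) (k : nat) : Re u = Re u' -> Im u = Im u' + 2 * INR k * PI -> Cexp u = Cexp u'.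
Proof. intros H1 H2. unfold Cexp. rewrite H1, H2, cos_period, sin_period. reflexivity. Qed.

Lemma tp_mult_re w : Re (Cmult twopii w) = - (2 * PI * Im w).
Proof. destruct w. unfold twopii, Cmult, Ci, RtoC. simpl. ring. Qed.
Lemma tp_mult_im w : Im (Cmult twopii w) = 2 * PI * Re w.
Proof. destruct w. unfold twopii, Cmult, Ci, RtoC. simpl. ring. Qed.

Lemma tp_div_re u : Re (Cdiv u twopii) = Im u / (2 * PI).
Proof. pose proof PI_RGT_0. destruct u. unfold twopii, Cdiv, Cinv, Cmult, Ci, RtoC. simpl. field. lra. Qed.
Lemma tp_div_im u : Im (Cdiv u twopii) = - Re u / (2 * PI).
Proof. pose proof PI_RGT_0. destruct u. unfold twopii, Cdiv, Cinv, Cmult, Ci, RtoC. simpl. field. lra. Qed.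

Lemma xi_m_re p z : Re (Cmult (xi p) (Cminus 1 z)) = kappa - Re (Cmult (xi p) z).
Proof. destruct z. unfold xi, Cmult, Cminus, Cplus, Copp, RtoC. simpl. ring. Qed.
Lemma xi_m_im p z : Im (Cmult (xi p) (Cminus 1 z)) = 2 * INR p * PI - Im (Cmult (xi p) z).
Proof. destruct z. unfold xi, Cmult, Cminus, Cplus, Copp, RtoC. simpl. ring. Qed.
Lemma xi_p_re p z : Re (Cmult (xi p) (Cplus 1 z)) = kappa + Re (Cmult (xi p) z).
Proof. destruct z. unfold xi, Cmult, Cminus, Cplus, Copp, RtoC. simpl. ring. Qed.
Lemma xi_p_im p z : Im (Cmult (xi p) (Cplus 1 z)) = 2 * INR p * PI + Im (Cmult (xi p) z).
Proof. destruct z. unfold xi, Cmult, Cminus, Cplus, Copp, RtoC. simpl. ring. Qed.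

Definition w1 p z := Cplus (Cminus (Cdiv (Cmult (xi p) (Cminus 1 z)) twopii) (RtoC (INR p))) 1.
Definition w2 p z := Cminus (Cdiv (Cmult (xi p) (Cplus 1 z)) twopii) (RtoC (INR p)).

Lemma w1_re p z : Re (w1 p z) = 1 - Im (Cmult (xi p) z) / (2 * PI).
Proof.
  pose proof PI_RGT_0. unfold w1. change (Re (Cplus (Cminus (Cdiv (Cmult (xi p) (Cminus 1 z)) twopii) (RtoC (INR p))) 1))
    with (Re (Cdiv (Cmult (xi p) (Cminus 1 z)) twopii) + - INR p + 1).
  rewrite tp_div_re, xi_m_im. field. lra.
Qed.
Lemma w1_im p z : Im (w1 p z) = - (kappa - Re (Cmult (xi p) z)) / (2 * PI).
Proof.
  pose proof PI_RGT_0. unfold w1. change (Im (Cplus (Cminus (Cdiv (Cmult (xi p) (Cminus 1 z)) twopii) (RtoC (INR p))) 1))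
    with (Im (Cdiv (Cmult (xi p) (Cminus 1 z)) twopii) + - 0 + 0).
  rewrite tp_div_im, xi_m_re. field. lra.
Qed.
Lemma w2_re p z : Re (w2 p z) = Im (Cmult (xi p) z) / (2 * PI).
Proof.
  pose proof PI_RGT_0. unfold w2. change (Re (Cminus (Cdiv (Cmult (xi p) (Cplus 1 z)) twopii) (RtoC (INR p))))
    with (Re (Cdiv (Cmult (xi p) (Cplus 1 z)) twopii) + - INR p).
  rewrite tp_div_re, xi_p_im. field. lra.
Qed.
Lemma w2_im p z : Im (w2 p z) = - (kappa + Re (Cmult (xi p) z)) / (2 * PI).
Proof.
  pose proof PI_RGT_0. unfold w2. change (Im (Cminus (Cdiv (Cmult (xi p) (Cplus 1 z)) twopii) (RtoC (INR p))))
    with (Im (Cdiv (Cmult (xi p) (Cplus 1 z)) twopii) + - 0).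
  rewrite tp_div_im, xi_p_re. field. lra.
Qed.

Lemma Copp_re (u : C) : Re (Copp u) = - Re u.
Proof. reflexivity. Qed.
Lemma Copp_im (u : C) : Im (Copp u) = - Im u.
Proof. reflexivity. Qed.

Lemma INR_pm1 (p : nat) : (0 < p)%nat -> INR (p - 1) = INR p - 1.
Proof. intros H. rewrite minus_INR by lia. reflexivity. Qed.

Lemma E1 p z : (0 < p)%nat -> Cexp (Cmult twopii (w1 p z)) = Cexp (Cmult (xi p) (Cminus 1 z)).
Proof.
  intros Hp. pose proof PI_RGT_0. symmetry. apply (Cexp_per _ _ (p - 1)).
  - rewrite tp_mult_re, w1_im, xi_m_re. field. lra.
  - rewrite tp_mult_im, w1_re, xi_m_im, INR_pm1 by auto. field. lra.
Qed.

Lemma E1' p z : (0 < p)%nat -> Cexp (Copp (Cmult twopii (w1 p z))) = Cexp (Copp (Cmult (xi p) (Cminus 1 z))).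
Proof.
  intros Hp. pose proof PI_RGT_0. apply (Cexp_per _ _ (p - 1)).
  - rewrite !Copp_re, tp_mult_re, w1_im, xi_m_re. field. lra.
  - rewrite !Copp_im, tp_mult_im, w1_re, xi_m_im, INR_pm1 by auto. field. lra.
Qed.

Lemma E2 p z : Cexp (Cmult twopii (w2 p z)) = Cexp (Cmult (xi p) (Cplus 1 z)).
Proof.
  pose proof PI_RGT_0. symmetry. apply (Cexp_per _ _ p).
  - rewrite tp_mult_re, w2_im, xi_p_re. field. lra.
  - rewrite tp_mult_im, w2_re, xi_p_im. field. lra.
Qed.

Lemma E2' p z : Cexp (Copp (Cmult twopii (w2 p z))) = Cexp (Copp (Cmult (xi p) (Cplus 1 z))).
Proof.
  pose proof PI_RGT_0. apply (Cexp_per _ _ p).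
  - rewrite !Copp_re, tp_mult_re, w2_im, xi_p_re. field. lra.
  - rewrite !Copp_im, tp_mult_im, w2_re, xi_p_im. field. lra.
Qed.

Lemma calL2_up w : 0 < Re w < 1 -> calL2 w = Li2 (Cexp (Cmult twopii w)).
Proof.
  intros H. unfold calL2. destruct (Rle_dec 0 (Im w)). reflexivity.
  unfold twopii. rewrite KLw by auto. reflexivity.
Qed.

Lemma calL2_dn w : (0 < Re w < 1 \/ Im w < 0) ->
  calL2 w = Cminus (Pw w) (Li2 (Cexp (Copp (Cmult twopii w)))).
Proof.
  intros H. unfold calL2. destruct (Rle_dec 0 (Im w)).
  - destruct H as [H|H]; [|lra]. unfold twopii. rewrite KLw by auto. reflexivity.
  - reflexivity.
Qed.

Lemma Pw_eq w : Pw w = (PI^2 * (2 * (Re w ^ 2 - Im w ^ 2) - 2 * Re w + 1/3), PI^2 * (4 * Re w * Im w - 2 * Im w)).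
Proof. destruct w. unfold Pw, Cmult, Cplus, Cminus, Copp, RtoC. simpl. f_equal; ring. Qed.

Lemma Palg p z : Cminus (Pw (w1 p z)) (Pw (w2 p z)) =
  Cminus (Cmult (xi p) (Cminus (Cplus (Cmult (RtoC kappa) z) (Cmult (RtoC kappa) z)) twopii))
         (RtoC (4 * INR p * PI ^ 2)).
Proof.
  pose proof PI_RGT_0. rewrite !Pw_eq, w1_re, w1_im, w2_re, w2_im.
  destruct z as [x y]. unfold xi, twopii, Cmult, Cplus, Cminus, Copp, RtoC, Ci. simpl.
  unfold Cplus. simpl. f_equal; field; lra.
Qed.

Lemma div2pi_pos a : 0 < a -> 0 < a / (2 * PI).
Proof. intros H. pose proof PI_RGT_0. apply Rdiv_lt_0_compat; lra. Qed.
Lemma div2pi_lt1 a : a < 2 * PI -> a / (2 * PI) < 1.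
Proof. intros H. pose proof PI_RGT_0. apply (Rmult_lt_reg_r (2*PI)); [lra|]. field_simplify; lra. Qed.

Theorem lemma3p3 (p : nat) (hp : (0 < p)%nat) (z : C) :
  (((- kappa < Re (Cmult (xi p) z) < kappa) \/ (0 < Im (Cmult (xi p) z) < 2 * PI)) ->
    F p z =
    Cminus
      (Cplus
         (Cminus
            (Cdiv (Li2 (Cexp (Copp (Cmult (xi p) (Cplus 1 z))))) (xi p))
            (Cdiv (Li2 (Cexp (Copp (Cmult (xi p) (Cminus 1 z))))) (xi p)))
         (Cmult (RtoC kappa) z))
      (Cmult (RtoC (2 * PI)) Ci))
  /\
  ((0 < Im (Cmult (xi p) z) < 2 * PI) ->
    F p z =
    Cplus
      (Cminus
         (Cminus
            (Cdiv (Li2 (Cexp (Cmult (xi p) (Cminus 1 z)))) (xi p))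
            (Cdiv (Li2 (Cexp (Cmult (xi p) (Cplus 1 z)))) (xi p)))
         (Cmult (RtoC kappa) z))
      (Cdiv (RtoC (4 * INR p * PI ^ 2)) (xi p))).
Proof.
  pose proof PI_RGT_0 as HPI. pose proof (xi_neq0 p) as Hxi.
  split.
  - intros H. unfold F. fold (w1 p z). fold (w2 p z).
    assert (C12 : (0 < Re (w1 p z) < 1 \/ Im (w1 p z) < 0) /\ (0 < Re (w2 p z) < 1 \/ Im (w2 p z) < 0)).
    { destruct H as [[Ha Hb]|[Ha Hb]].
      - split; right.
        + rewrite w1_im. unfold Rdiv. rewrite Ropp_mult_distr_l_reverse. apply Ropp_lt_gt_0_contravar.
          apply div2pi_pos. lra.
        + rewrite w2_im. unfold Rdiv. rewrite Ropp_mult_distr_l_reverse. apply Ropp_lt_gt_0_contravar.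
          apply div2pi_pos. lra.
      - split; left.
        + rewrite w1_re. pose proof (div2pi_pos _ Ha). pose proof (div2pi_lt1 _ Hb). lra.
        + rewrite w2_re. pose proof (div2pi_pos _ Ha). pose proof (div2pi_lt1 _ Hb). lra. }
    destruct C12 as [C1 C2].
    rewrite (calL2_dn (w1 p z) C1), (calL2_dn (w2 p z) C2).
    rewrite E1', E2' by auto.
    replace (Pw (w1 p z)) with (Cplus (Pw (w2 p z)) (Cminus (Pw (w1 p z)) (Pw (w2 p z)))) by ring.
    rewrite Palg. fold twopii. field. auto.
  - intros [Ha Hb]. unfold F. fold (w1 p z). fold (w2 p z).
    rewrite (calL2_up (w1 p z)).
    2:{ rewrite w1_re. pose proof (div2pi_pos _ Ha). pose proof (div2pi_lt1 _ Hb). lra. }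
    rewrite (calL2_up (w2 p z)).
    2:{ rewrite w2_re. pose proof (div2pi_pos _ Ha). pose proof (div2pi_lt1 _ Hb). lra. }
    rewrite E1, E2 by auto. field. auto.
Qed.
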